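(* If $G$ and $H$ are isoclinic finite groups with $|G|=|H|$, then $A_G(t)=A_H(t)$ and $B_G(t)=B_H(t)$.
   Context: For a finite group $G$ and $n\ge 0$, $G$ acts on $G^n$ by simultaneous conjugation. Let $G^{(n)}\subseteq G^n$ be the set of $n$-tuples of pairwise commuting elements. Let $\alpha_{G,n}$ (resp. $\beta_{G,n}$) be the number of $G$-orbits on $G^n$ (resp. on $G^{(n)}$), and set $A_G(t)=\sum_{n\ge0}\alpha_{G,n}t^n$, $B_G(t)=\sum_{n\ge0}\beta_{G,n}t^n$. Two finite groups $G$ and $H$ are isoclinic if there exist isomorphisms $\theta:G/Z(G)\to H/Z(H)$ and $\phi:G'\to H'$ (commutator subgroups) such that $\phi([g_1,g_2])=[h_1,h_2]$ whenever $\theta(g_iZ(G))=h_iZ(H)$, $i=1,2$. *)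

(* Defs.v *)
From mathcomp Require Import all_boot all_order all_fingroup all_solvable.
Set Implicit Arguments. Unset Strict Implicit. Unset Printing Implicit Defensive.
Local Open Scope group_scope.

Section Defs.
Variable gT : finGroupType.

Definition tuples (G : {set gT}) (n : nat) : {set {ffun 'I_n -> gT}} :=
  [set t : {ffun 'I_n -> gT} | [forall i, t i \in G]].

Definition ctuples (G : {set gT}) (n : nat) : {set {ffun 'I_n -> gT}} :=
  [set t in tuples G n | [forall i, forall j, t i * t j == t j * t i]].

Definition sconj n (t : {ffun 'I_n -> gT}) (g : gT) : {ffun 'I_n -> gT} :=
  [ffun i => t i ^ g].

Definition sorbit (G : {set gT}) n (t : {ffun 'I_n -> gT}) : {set {ffun 'I_n -> gT}} :=
  [set sconj t g | g in G].

Definition alpha (G : {set gT}) (n : nat) : nat :=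
  #|[set sorbit G t | t in tuples G n]|.

Definition beta (G : {set gT}) (n : nat) : nat :=
  #|[set sorbit G t | t in ctuples G n]|.
End Defs.

Definition isoclinic (gT hT : finGroupType) (G : {group gT}) (H : {group hT}) : Prop :=
  exists (theta : {morphism G / 'Z(G) >-> coset_of 'Z(H)})
         (phi : {morphism G^`(1) >-> hT}),
    [/\ isom (G / 'Z(G)) (H / 'Z(H)) theta,
        isom G^`(1) H^`(1) phi &
        forall g1 g2 h1 h2, g1 \in G -> g2 \in G -> h1 \in H -> h2 \in H ->
          theta (coset 'Z(G) g1) = coset 'Z(H) h1 ->
          theta (coset 'Z(G) g2) = coset 'Z(H) h2 ->
          phi [~ g1, g2] = [~ h1, h2]].

(* Main.v *)
Require Import Defs.
From mathcomp Require Import all_boot all_order all_fingroup all_solvable.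
Set Implicit Arguments. Unset Strict Implicit. Unset Printing Implicit Defensive.
Local Open Scope group_scope.

Section Act.
Variables (gT : finGroupType) (n : nat).
Lemma sconj1 : (@sconj gT n)^~ 1 =1 id.
Proof. by move=> t; apply/ffunP=> i; rewrite ffunE conjg1. Qed.
Lemma sconjM : forall t, act_morph (@sconj gT n) t.
Proof. by move=> t a b; apply/ffunP=> i; rewrite !ffunE conjgM. Qed.
Definition sconj_action := TotalAction sconj1 sconjM.

Lemma in_fix (t : {ffun 'I_n -> gT}) a :
  (t \in 'Fix_sconj_action[a]) = [forall i, t i * a == a * t i].
Proof.
apply/afix1P/forallP => /= [E i | E].
  by apply/eqP/commgP/conjg_fixP; rewrite -{2}E ffunE.
by apply/ffunP=> i; rewrite ffunE; apply/conjg_fixP/commgP/eqP.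
Qed.

Lemma alphaE (G : {group gT}) :
  \sum_(a in G) #|'Fix_(tuples G n | sconj_action)[a]| = (alpha G n * #|G|)%N.
Proof.
rewrite Frobenius_Cauchy; last first.
  apply/actsP=> a Ga t; rewrite !inE /=.
  by apply: eq_forallb => i; rewrite ffunE groupJr.
by [].
Qed.

Lemma betaE (G : {group gT}) :
  \sum_(a in G) #|'Fix_(ctuples G n | sconj_action)[a]| = (beta G n * #|G|)%N.
Proof.
rewrite Frobenius_Cauchy; last first.
  apply/actsP=> a Ga t; rewrite !inE /=.
  congr andb.
    by apply: eq_forallb => i; rewrite ffunE groupJr.
  apply: eq_forallb => i; apply: eq_forallb => j; rewrite !ffunE -!conjMg.
  by rewrite (inj_eq (@conjg_inj _ a)).
by [].
Qed.
End Act.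

Section Transfer.
Variables (gT hT : finGroupType) (G : {group gT}) (H : {group hT}) (f : gT -> hT).
Hypothesis fG : {in G, forall x, f x \in H}.
Hypothesis finj : {in G &, injective f}.
Hypothesis cardGH : #|G| = #|H|.
Hypothesis fcomm : {in G &, forall x y, (f x * f y == f y * f x) = (x * y == y * x)}.

Lemma fGH : f @: G = H.
Proof.
apply/eqP; rewrite eqEcard card_in_imset // cardGH leqnn andbT.
by apply/subsetP=> _ /imsetP[x Gx ->]; apply: fG.
Qed.

Definition ginv (y : hT) : gT := odflt 1 [pick x in G | f x == y].
Lemma ginvP y : y \in H -> ginv y \in G /\ f (ginv y) = y.
Proof.
rewrite -fGH => /imsetP[x Gx ->]; rewrite /ginv.
case: pickP => [z /andP[Gz /eqP ->] | /(_ x)] //=.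
by rewrite Gx eqxx.
Qed.

Definition tmap n (t : {ffun 'I_n -> gT}) : {ffun 'I_n -> hT} := [ffun i => f (t i)].
Definition gmap n (t : {ffun 'I_n -> hT}) : {ffun 'I_n -> gT} := [ffun i => ginv (t i)].

Lemma tmap_inj n : {in tuples G n &, injective (@tmap n)}.
Proof.
move=> t1 t2; rewrite !inE => /forallP T1 /forallP T2 E.
apply/ffunP=> i; apply: finj => //; by rewrite -!(ffunE (fun i => f (_ i))) -/(tmap _) E.
Qed.

Lemma tmapK n (t : {ffun 'I_n -> hT}) : t \in tuples H n -> tmap (gmap t) = t /\ gmap t \in tuples G n.
Proof.
rewrite inE => /forallP T; split.
  by apply/ffunP=> i; rewrite !ffunE; case: (ginvP (T i)).
by rewrite inE; apply/forallP=> i; rewrite ffunE; case: (ginvP (T i)).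
Qed.

Lemma fix_tr n a (t : {ffun 'I_n -> gT}) : a \in G -> t \in tuples G n ->
  (tmap t \in afix (sconj_action hT n) [set f a]) = (t \in afix (sconj_action gT n) [set a]).
Proof.
move=> Ga; rewrite inE => /forallP T; rewrite !in_fix.
by apply: eq_forallb => i; rewrite ffunE fcomm.
Qed.

Lemma tup_tr n (t : {ffun 'I_n -> gT}) : t \in tuples G n -> tmap t \in tuples H n.
Proof. by rewrite !inE => /forallP T; apply/forallP=> i; rewrite ffunE fG. Qed.

Lemma ctup_tr n (t : {ffun 'I_n -> gT}) : t \in tuples G n ->
  (tmap t \in ctuples H n) = (t \in ctuples G n).
Proof.
move=> Tt; rewrite [_ \in ctuples H n]inE [_ \in ctuples G n]inE Tt tup_tr //=.
move: Tt; rewrite inE => /forallP T.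
by apply: eq_forallb => i; apply: eq_forallb => j; rewrite !ffunE fcomm.
Qed.

Lemma card_fix_alpha n a : a \in G ->
  #|'Fix_(tuples G n | (sconj_action gT n))[a]| = #|'Fix_(tuples H n | (sconj_action hT n))[f a]|.
Proof.
move=> Ga.
have -> : 'Fix_(tuples H n | (sconj_action hT n))[f a] =
   (@tmap n) @: 'Fix_(tuples G n | (sconj_action gT n))[a].
  apply/setP=> t; apply/idP/imsetP => [/setIP[Ht Ft] | [s /setIP[Gs Fs] ->]].
    have [E Gt] := tmapK Ht; exists (gmap t) => //.
    by rewrite inE Gt -fix_tr // E.
  by rewrite inE tup_tr // fix_tr.
rewrite card_in_imset //; apply: sub_in2 (@tmap_inj n) => t /setIP[]//.
Qed.

Lemma card_fix_beta n a : a \in G ->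
  #|'Fix_(ctuples G n | (sconj_action gT n))[a]| = #|'Fix_(ctuples H n | (sconj_action hT n))[f a]|.
Proof.
move=> Ga.
have -> : 'Fix_(ctuples H n | (sconj_action hT n))[f a] =
   (@tmap n) @: 'Fix_(ctuples G n | (sconj_action gT n))[a].
  apply/setP=> t; apply/idP/imsetP => [/setIP[Ht Ft] | [s /setIP[Gs Fs] ->]].
    have Ht' : t \in tuples H n by move: Ht; rewrite inE => /andP[].
    have [E Gt] := tmapK Ht'; exists (gmap t) => //.
    by rewrite in_setI -ctup_tr // -fix_tr // E Ht.
  have Gs' : s \in tuples G n by move: Gs; rewrite inE => /andP[].
  rewrite in_setI ctup_tr // fix_tr //.
  by rewrite Gs.
rewrite card_in_imset //; apply: sub_in2 (@tmap_inj n) => t /setIP[].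
by rewrite inE => /andP[].
Qed.

Lemma transferAB n : alpha G n = alpha H n /\ beta G n = beta H n.
Proof.
have G0 : 0 < #|G| by rewrite cardG_gt0.
split; apply/eqP; rewrite -(eqn_pmul2r G0); apply/eqP.
  rewrite -alphaE [in RHS]cardGH -alphaE.
  transitivity (\sum_(a in G) #|'Fix_(tuples H n | sconj_action hT n)[f a]|).
    by apply: eq_bigr => a Ga; apply: card_fix_alpha.
  by rewrite -(big_imset (fun b => #|'Fix_(tuples H n | sconj_action hT n)[b]|) finj) fGH.
rewrite -betaE [in RHS]cardGH -betaE.
transitivity (\sum_(a in G) #|'Fix_(ctuples H n | sconj_action hT n)[f a]|).
  by apply: eq_bigr => a Ga; apply: card_fix_beta.
by rewrite -(big_imset (fun b => #|'Fix_(ctuples H n | sconj_action hT n)[b]|) finj) fGH.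
Qed.
End Transfer.

Lemma comm_eq1 (T : finGroupType) (a b : T) : (a * b == b * a) = ([~ a, b] == 1).
Proof. by apply/eqP/commgP. Qed.

Section Construct.
Variables (gT hT : finGroupType) (G : {group gT}) (H : {group hT}).
Variable theta : {morphism G / 'Z(G) >-> coset_of 'Z(H)}.
Variable phi : {morphism G^`(1) >-> hT}.
Hypothesis isoT : isom (G / 'Z(G)) (H / 'Z(H)) theta.
Hypothesis isoP : isom G^`(1) H^`(1) phi.
Hypothesis hcomm : forall g1 g2 h1 h2, g1 \in G -> g2 \in G -> h1 \in H -> h2 \in H ->
          theta (coset 'Z(G) g1) = coset 'Z(H) h1 ->
          theta (coset 'Z(G) g2) = coset 'Z(H) h2 ->
          phi [~ g1, g2] = [~ h1, h2].
Hypothesis cardGH : #|G| = #|H|.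

Lemma cardZ : #|'Z(G)| = #|'Z(H)|.
Proof.
have := isom_card isoT.
rewrite !card_quotient ?normal_norm ?center_normal // => Eq.
have := Lagrange (center_sub G); have := Lagrange (center_sub H).
rewrite -cardGH Eq => <- /eqP; rewrite eqn_pmul2r ?indexg_gt0 //.
by move/eqP.
Qed.

Definition psi (x : gT) : hT := nth 1 (enum 'Z(H)) (index x (enum 'Z(G))).

Lemma psi_in x : x \in 'Z(G) -> psi x \in 'Z(H).
Proof.
move=> Zx; rewrite /psi -mem_enum mem_nth // -cardE -cardZ cardE index_mem.
by rewrite mem_enum.
Qed.

Lemma psi_inj : {in 'Z(G) &, injective psi}.
Proof.
move=> x y Zx Zy; rewrite /psi => /eqP.
have sz : forall z, z \in 'Z(G) -> index z (enum 'Z(G)) < size (enum 'Z(H)).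
  by move=> z Zz; rewrite -cardE -cardZ cardE index_mem mem_enum.
rewrite nth_uniq ?enum_uniq ?sz //.
move/eqP=> E; rewrite -(nth_index 1 (s := enum 'Z(G)) (x := x)) ?mem_enum //.
by rewrite E nth_index // mem_enum.
Qed.

Definition rG (g : gT) : gT := repr (coset 'Z(G) g).
Definition rH (g : gT) : hT := repr (theta (coset 'Z(G) g)).
Definition fmap (g : gT) : hT := psi (g * (rG g)^-1) * rH g.

Lemma zG_in g : g \in G -> g * (rG g)^-1 \in 'Z(G).
Proof.
move=> Gg; have Ng : g \in 'N('Z(G)).
  by apply: subsetP Gg; rewrite normal_norm ?center_normal.
rewrite /rG; set r := repr _; have : r \in coset 'Z(G) g := mem_repr_coset _.
rewrite val_coset // => /rcosetP[z Zz ->].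
by rewrite invMg mulgA mulgV mul1g groupV.
Qed.

Lemma rH_in g : g \in G -> rH g \in H.
Proof.
move=> Gg.
have : theta (coset 'Z(G) g) \in H / 'Z(H).
  by rewrite -(isom_im isoT) mem_morphim // mem_quotient.
case/morphimP => h Nh Hh; rewrite /rH => ->.
set r := repr _; have : r \in coset 'Z(H) h := mem_repr_coset _.
rewrite val_coset // => /rcosetP[z Zz ->].
by rewrite groupM // (subsetP (center_sub H)).
Qed.

Lemma f_coset g : g \in G -> coset 'Z(H) (fmap g) = theta (coset 'Z(G) g).
Proof. by move=> Gg; rewrite /fmap coset_kerl ?psi_in ?zG_in // coset_reprK. Qed.

Lemma fG : {in G, forall x, fmap x \in H}.
Proof.
move=> g Gg; rewrite groupM ?rH_in //.
by rewrite (subsetP (center_sub H)) // psi_in // zG_in.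
Qed.

Lemma finj : {in G &, injective fmap}.
Proof.
move=> g1 g2 G1 G2 E.
have E1 : coset 'Z(G) g1 = coset 'Z(G) g2.
  apply: (injmP (isom_inj isoT)); rewrite ?mem_quotient //.
  by rewrite -!f_coset // E.
have Z1 := zG_in G1; have Z2 := zG_in G2.
move: E Z1 Z2; rewrite /fmap /rH /rG E1 => /mulIg /psi_inj H1 Z1 Z2.
exact: mulIg (H1 Z1 Z2).
Qed.

Lemma fcomm : {in G &, forall x y, (fmap x * fmap y == fmap y * fmap x) = (x * y == y * x)}.
Proof.
move=> x y Gx Gy; rewrite !comm_eq1.
rewrite -(hcomm Gx Gy (fG Gx) (fG Gy)) ?f_coset //.
by rewrite (morph_injm_eq1 (isom_inj isoP)) // mem_commg.
Qed.

End Construct.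

Theorem corollary4p4 (gT hT : finGroupType) (G : {group gT}) (H : {group hT}) :
  isoclinic G H -> #|G| = #|H| ->
  (forall n : nat, alpha G n = alpha H n) /\ (forall n : nat, beta G n = beta H n).
Proof.
move=> [theta [phi [isoT isoP hc]]] cGH.
have T := @transferAB _ _ G H (fmap theta) (fG isoT cGH) (finj isoT cGH) cGH (fcomm isoT isoP hc cGH).
split=> n; case: (T n) => //.
Qed.
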